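(* Let $\phi$ be a reduced Boolean formula in the variables $x_1,\dots,x_n$ defining a set $S \subseteq \{0,1\}^n$ and let $Q \subseteq [0,1]^n$ be any convex set containing $S$. Then $\phi^n(Q) = \operatorname{conv}(S)$.
   Context: Boolean formulas are built from input variables $x_1,\dots,x_n$ using $\wedge$, $\vee$, $\neg$, interpreted as functions $\{0,1\}^n\to\{0,1\}$; $\phi$ defines $S=\{x\in\{0,1\}^n:\phi(x)=1\}$. A formula is reduced if negations apply only to input variables. For a reduced $\phi$ and convex $Q\subseteq[0,1]^n$, $\phi(Q)$ is defined recursively: $x_i$ is replaced by $\{x \in Q : x_i = 1\}$; $\neg x_i$ by $\{x \in Q : x_i = 0\}$; a conjunction by the intersection of the corresponding sets; a disjunction by the convex hull of the union of the corresponding sets. Iterates: $\phi^1(Q):=\phi(Q)$ and $\phi^{\ell+1}(Q):=\phi(\phi^\ell(Q))$ for $\ell\ge1$. *)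

(* Defs.v *)
From HB Require Import structures.
From mathcomp Require Import all_boot all_order all_algebra.
From mathcomp Require Import boolp classical_sets reals convex.
Set Implicit Arguments. Unset Strict Implicit. Unset Printing Implicit Defensive.
Import Order.TTheory GRing.Theory Num.Theory.
Local Open Scope classical_set_scope.
Local Open Scope ring_scope.

(* Reduced Boolean formulas in the variables x_0, ..., x_{n-1}:
   negations only on variables. *)
Inductive rformula (n : nat) : Type :=
| RVar of 'I_n
| RNVar of 'I_n
| RAnd of rformula n & rformula n
| ROr of rformula n & rformula n.

Fixpoint reval n (phi : rformula n) (b : 'I_n -> bool) : bool :=
  match phi with
  | RVar i => b i
  | RNVar i => ~~ b i
  | RAnd p q => reval p b && reval q b
  | ROr p q => reval p b || reval q b
  end.

Definition rdefset (R : realType) n (phi : rformula n) : set 'rV[R]_n :=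
  [set x | exists b : 'I_n -> bool, x = \row_i (b i)%:R /\ reval phi b].

Definition convexR (R : realType) n (A : set 'rV[R]_n) : Prop :=
  convex_set (A : set (convex_lmodType 'rV[R]_n)).

Definition conv_hull (R : realType) n (A : set 'rV[R]_n) : set 'rV[R]_n :=
  [set x | forall B : set 'rV[R]_n, convexR B -> A `<=` B -> B x].

Definition unit_cube (R : realType) n : set 'rV[R]_n :=
  [set x | forall i, 0 <= x ord0 i <= 1].

Fixpoint rapply (R : realType) n (phi : rformula n) (Q : set 'rV[R]_n)
  : set 'rV[R]_n :=
  match phi with
  | RVar i => [set x | Q x /\ x ord0 i = 1]
  | RNVar i => [set x | Q x /\ x ord0 i = 0]
  | RAnd p q => rapply p Q `&` rapply q Q
  | ROr p q => conv_hull (rapply p Q `|` rapply q Q)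
  end.

Definition riter (R : realType) n (phi : rformula n) (l : nat)
  (Q : set 'rV[R]_n) : set 'rV[R]_n := iter l (rapply phi) Q.

(* Main.v *)
Require Import Defs.
From HB Require Import structures.
From mathcomp Require Import all_boot all_order all_algebra.
From mathcomp Require Import boolp classical_sets reals convex.
From mathcomp Require Import ring lra interval_inference.
Set Implicit Arguments. Unset Strict Implicit. Unset Printing Implicit Defensive.
Import Order.TTheory GRing.Theory Num.Theory.
Local Open Scope classical_set_scope.
Local Open Scope ring_scope.

Section Main.
Variable R : realType.
Variable n : nat.
Local Notation V := 'rV[R]_n.

Definition cvx (A : set V) := forall x y (t : R), 0 <= t -> t <= 1 ->
  A x -> A y -> A (t *: x + (1 - t) *: y).

Lemma cvxE (A : set V) : convexR A <-> cvx A.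
Proof.
split.
- move=> h x y t t0 t1 Ax Ay.
  pose p : {i01 R} := Itv01 t0 t1.
  have := h x y p.
  rewrite !inE. move=> /(_ Ax Ay). by [].
- move=> h x y p; rewrite !inE => Ax Ay.
  have p0 : 0 <= p%:num by [].
  have p1 : p%:num <= 1 by [].
  have := h x y p%:inum p0 p1 Ax Ay. done.
Qed.

Definition hull (A : set V) := conv_hull A.

Lemma hull_cvx A : cvx (hull A).
Proof.
move=> x y t t0 t1 hx hy B cB AB.
have cB' := (proj1 (cvxE B) cB).
by apply: cB' => //; [apply: hx | apply: hy].
Qed.

Lemma sub_hull A : A `<=` hull A.
Proof. by move=> x Ax B _ AB; apply: AB. Qed.

Lemma hull_min A B : cvx B -> A `<=` B -> hull A `<=` B.
Proof. by move=> cB AB x hx; apply: hx => //; apply/cvxE. Qed.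

Lemma hull_mono A B : A `<=` B -> hull A `<=` hull B.
Proof.
move=> AB; apply: hull_min; first exact: hull_cvx.
by move=> x /AB; apply: sub_hull.
Qed.

Lemma cvxI A B : cvx A -> cvx B -> cvx (A `&` B).
Proof.
move=> cA cB x y t t0 t1 [Ax Bx] [Ay By]; split; [exact: cA | exact: cB].
Qed.

Lemma cvx_hyp (Q : set V) i (c : R) : cvx Q -> cvx [set x | Q x /\ x ord0 i = c].
Proof.
move=> cQ x y t t0 t1 [Qx xi] [Qy yi]; split; first exact: cQ.
rewrite !mxE xi yi; lra.
Qed.

Lemma cvx0 : cvx set0.
Proof. by move=> x y t _ _ []. Qed.

Lemma cube_cvx : cvx (@unit_cube R n).
Proof.
move=> x y t t0 t1 hx hy i; rewrite !mxE.
have /andP[x0 x1] := hx i; have /andP[y0 y1] := hy i.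
apply/andP; split; nra.
Qed.

Lemma comb0 (x y : V) : 0 *: x + (1 - 0) *: y = y.
Proof. by rewrite scale0r add0r subr0 scale1r. Qed.

Lemma comb1 (x y : V) : 1 *: x + (1 - 1) *: y = x.
Proof. by rewrite subrr scale0r addr0 scale1r. Qed.

Lemma extreme (a b t c : R) : 0 <= a <= 1 -> 0 <= b <= 1 -> 0 < t -> t < 1 ->
  (c = 0 \/ c = 1) -> t * a + (1 - t) * b = c -> a = c /\ b = c.
Proof.
move=> /andP[a0 a1] /andP[b0 b1] t0 t1 [->|->] e.
- have ha : t * a = 0 by nra.
  have hb : (1 - t) * b = 0 by nra.
  move/eqP: ha; rewrite mulf_eq0 => /orP[/eqP|/eqP] ha; first by lra.
  move/eqP: hb; rewrite mulf_eq0 => /orP[/eqP|/eqP] hb; first by lra.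
  by [].
- have ha : t * (1 - a) = 0 by nra.
  have hb : (1 - t) * (1 - b) = 0 by nra.
  move/eqP: ha; rewrite mulf_eq0 => /orP[/eqP|/eqP] ha; first by lra.
  move/eqP: hb; rewrite mulf_eq0 => /orP[/eqP|/eqP] hb; first by lra.
  split; lra.
Qed.

Local Notation cube := (@unit_cube R n).

Lemma rapply_cvx (phi : rformula n) (Q : set V) : cvx Q -> cvx (rapply phi Q).
Proof.
move=> cQ; elim: phi => [i|i|p ihp q ihq|p ihp q ihq] /=.
- exact: cvx_hyp.
- exact: cvx_hyp.
- exact: cvxI.
- exact: hull_cvx.
Qed.

Lemma rapply_sub (phi : rformula n) (Q : set V) : cvx Q -> rapply phi Q `<=` Q.
Proof.
move=> cQ; elim: phi => [i|i|p ihp q ihq|p ihp q ihq] /=.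
- by move=> x [].
- by move=> x [].
- by move=> x [/ihp].
- by apply: hull_min => // x [/ihp|/ihq].
Qed.

Lemma rapply_mono (phi : rformula n) (Q Q' : set V) : Q `<=` Q' -> rapply phi Q `<=` rapply phi Q'.
Proof.
move=> QQ; elim: phi => [i|i|p ihp q ihq|p ihp q ihq] /=.
- by move=> x [/QQ].
- by move=> x [/QQ].
- by move=> x [/ihp ? /ihq].
- by apply: hull_mono => x [/ihp|/ihq]; [left|right].
Qed.

Lemma riter_cvx (phi : rformula n) m (Q : set V) : cvx Q -> cvx (riter phi m Q).
Proof.
move=> cQ; elim: m => [|m ih] //; rewrite /riter iterS; exact: rapply_cvx.
Qed.

Lemma riter_sub (phi : rformula n) m (Q : set V) : cvx Q -> riter phi m Q `<=` Q.
Proof.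
move=> cQ; elim: m => [|m ih] //; rewrite /riter iterS.
by move=> x /(rapply_sub (riter_cvx (phi:=phi) (m:=m) cQ)) /ih.
Qed.

Lemma riter_mono (phi : rformula n) m (Q Q' : set V) : Q `<=` Q' -> riter phi m Q `<=` riter phi m Q'.
Proof.
move=> QQ; elim: m => [|m ih] //; rewrite /riter !iterS.
exact: rapply_mono.
Qed.

Lemma hull_sub_cube (A : set V) : A `<=` cube -> hull A `<=` cube.
Proof. by move=> Ac; apply: hull_min => //; exact: cube_cvx. Qed.

Lemma hull_face (A : set V) i (c : R) : A `<=` cube -> (c = 0 \/ c = 1) ->
  hull A `&` [set x | x ord0 i = c] `<=` hull (A `&` [set x | x ord0 i = c]).
Proof.
move=> Ac hc.
pose B := [set x | hull (A `&` [set x | x ord0 i = c]) x \/ (cube x /\ x ord0 i <> c)].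
suff: hull A `<=` B.
  by move=> hAB x [/hAB [//|[_ ?]] xi].
apply: hull_min.
- move=> x y t t0 t1 Bx By.
  have AHc : A `&` [set x | x ord0 i = c] `<=` cube by move=> z [/Ac].
  have xc : cube x by case: Bx => [/(hull_sub_cube AHc)|[]].
  have yc : cube y by case: By => [/(hull_sub_cube AHc)|[]].
  have [zi|zi] := eqVneq ((t *: x + (1 - t) *: y) ord0 i) c; last first.
    by right; split => //; [exact: cube_cvx | apply/eqP].
  have [->|tn0] := eqVneq t 0; first by rewrite comb0.
  have [->|tn1] := eqVneq t 1; first by rewrite comb1.
  have t0' : 0 < t by rewrite lt_neqAle eq_sym tn0 t0.
  have t1' : t < 1 by rewrite lt_neqAle tn1 t1.
  move: zi; rewrite !mxE => zi.
  have [xi yi] := extreme (xc i) (yc i) t0' t1' hc zi.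
  left; apply: hull_cvx => //.
  + by case: Bx => // [[_]].
  + by case: By => // [[_]].
- move=> x Ax; have [xi|xi] := eqVneq (x ord0 i) c.
  + by left; apply: sub_hull.
  + by right; split; [exact: Ac | apply/eqP].
Qed.

Lemma rapply_face (phi : rformula n) (K : set V) i (c : R) : cvx K -> K `<=` cube -> (c = 0 \/ c = 1) ->
  rapply phi K `&` [set x | x ord0 i = c] `<=` rapply phi [set x | K x /\ x ord0 i = c].
Proof.
move=> cK Kc hc; elim: phi => [j|j|p ihp q ihq|p ihp q ihq] /=.
- by move=> x [[Kx xj] xi].
- by move=> x [[Kx xj] xi].
- by move=> x [[px qx] xi]; split; [apply: ihp | apply: ihq].
- move=> x hx.
  have Uc : rapply p K `|` rapply q K `<=` cube.
    by move=> y [/(rapply_sub cK)/Kc|/(rapply_sub cK)/Kc].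
  have := hull_face (i := i) Uc hc hx.
  apply: hull_mono => y [[py|qy] yi]; [left; exact: ihp | right; exact: ihq].
Qed.


Lemma riter_face (phi : rformula n) m (K : set V) i (c : R) : cvx K -> K `<=` cube -> (c = 0 \/ c = 1) ->
  riter phi m K `&` [set x | x ord0 i = c] `<=` riter phi m [set x | K x /\ x ord0 i = c].
Proof.
move=> cK Kc hc; elim: m => [|m ih]; first by move=> x [].
rewrite /riter !iterS => x hx.
apply: (rapply_mono ih).
apply: (rapply_face (riter_cvx (phi:=phi) (m:=m) cK)) => //.
by move=> y /(riter_sub (phi:=phi) (m:=m) cK) /Kc.
Qed.

Definition face (s : 'I_n -> option bool) : set V :=
  [set x | cube x /\ forall i c, s i = Some c -> x ord0 i = (c : nat)%:R].
Definition consistent (s : 'I_n -> option bool) (b : 'I_n -> bool) :=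
  forall i c, s i = Some c -> b i = c.
Definition rowb (b : 'I_n -> bool) : V := \row_i ((b i : nat)%:R).
Definition nfree (s : 'I_n -> option bool) := #|[pred i | s i == None]|.
Definition upd (s : 'I_n -> option bool) i c :=
  fun j => if j == i then Some c else s j.

Lemma nfree_upd s i c : s i = None -> nfree s = (nfree (upd s i c)).+1.
Proof.
move=> si; rewrite /nfree (cardD1 i) inE si eqxx add1n; congr (_.+1).
apply: eq_card => j; rewrite !inE /upd; case: eqVneq => //.
Qed.

Lemma rowb_face s b : consistent s b -> face s (rowb b).
Proof.
move=> hb; split.
- by move=> i; rewrite mxE; case: (b i) => /=; rewrite ?ler01 ?lexx.
- by move=> i c /hb; rewrite mxE => ->.
Qed.

Lemma face_cube s : face s `<=` cube.
Proof. by move=> x []. Qed.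

Lemma face_hull s (B : set V) : cvx B -> (forall b, consistent s b -> B (rowb b)) ->
  face s `<=` B.
Proof.
move=> cB.
suff: forall k s, nfree s = k -> (forall b, consistent s b -> B (rowb b)) -> face s `<=` B.
  by move=> h; apply: h.
elim => [|k ih] {}s hk hB x [xc xs].
- have none : forall i, s i <> None.
    move=> i si; have := card0_eq hk i; by rewrite !inE si.
  have -> : x = rowb (fun i => odflt false (s i)).
    apply/rowP => j; rewrite mxE; case E: (s j) => [c|] /=; last by case: (none j).
    by rewrite (xs j c E).
  apply: hB => i c ->; done.
- case: (pickP [pred i | s i == None]) => [i /eqP si | H]; last first.
    have : nfree s = 0%N by apply: eq_card0 => j; rewrite !inE; apply: H.
    by rewrite hk.
  pose x1 : V := \row_j (if j == i then 1 else x ord0 j).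
  pose x0 : V := \row_j (if j == i then 0 else x ord0 j).
  have -> : x = x ord0 i *: x1 + (1 - x ord0 i) *: x0.
    apply/rowP => j; rewrite !mxE; case: eqVneq => [->|_]; ring.
  have /andP[xi0 xi1] := xc i.
  have hsub c : forall b, consistent (upd s i c) b -> consistent s b.
    move=> b hb j c' sj; apply: hb; rewrite /upd; case: eqVneq => // eji.
    by move: sj; rewrite eji si.
  have hk' c : nfree (upd s i c) = k by apply/eq_add_S; rewrite -(nfree_upd c si).
  apply: cB => //.
  + apply: (ih (upd s i true) (hk' true) (fun b hb => hB b (hsub true b hb))).
    split.
    * move=> j; rewrite mxE; case: eqVneq => _; [by rewrite ler01 lexx | exact: xc].
    * move=> j c; rewrite /upd mxE; case: eqVneq => [_ [<-]//|_]; exact: xs.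
  + apply: (ih (upd s i false) (hk' false) (fun b hb => hB b (hsub false b hb))).
    split.
    * move=> j; rewrite mxE; case: eqVneq => _; [by rewrite ler01 lexx | exact: xc].
    * move=> j c; rewrite /upd mxE; case: eqVneq => [_ [<-]//|_]; exact: xs.
Qed.


Definition Dfree (s : 'I_n -> option bool) : set V :=
  [set x | exists i, s i = None /\ (x ord0 i = 0 \/ x ord0 i = 1)].

Lemma nat01 : ((false : nat)%:R : R) = 0 /\ ((true : nat)%:R : R) = 1.
Proof. by split. Qed.

Lemma one_step (psi : rformula n) s (N : set V) : cvx N -> N `<=` face s ->
  (rapply psi N `<=` hull (N `&` Dfree s)) \/
  (N `<=` rapply psi N /\ forall b, consistent s b -> reval psi b).
Proof.
move=> cN Nf; have h10 : (1 : R) <> 0 by apply/eqP; rewrite oner_eq0.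
elim: psi => [j|j|p ihp q ihq|p ihp q ihq] /=.
- case E: (s j) => [[|]|].
  + right; split; last by move=> b hb; rewrite (hb j true E).
    move=> x Nx; split => //; have [_ xs] := Nf x Nx; by rewrite (xs j true E).
  + left => x [Nx xj]; have [_ xs] := Nf x Nx.
    by have := xs j false E; rewrite xj.
  + left => x [Nx xj]; apply: sub_hull; split => //; exists j; split => //; by right.
- case E: (s j) => [[|]|].
  + left => x [Nx xj]; have [_ xs] := Nf x Nx.
    by have := xs j true E; rewrite xj => /esym.
  + right; split; last by move=> b hb; rewrite (hb j false E).
    move=> x Nx; split => //; have [_ xs] := Nf x Nx; by rewrite (xs j false E).
  + left => x [Nx xj]; apply: sub_hull; split => //; exists j; split => //; by left.
- have [hp|[Np hp]] := ihp; have [hq|[Nq hq]] := ihq.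
  + by left => x [/hp].
  + by left => x [/hp].
  + by left => x [_ /hq].
  + right; split; first by move=> x Nx; split; [apply: Np | apply: Nq].
    by move=> b hb; rewrite (hp b hb) (hq b hb).
- have [hp|[Np hp]] := ihp; last first.
    right; split; first by move=> x Nx; apply: sub_hull; left; apply: Np.
    by move=> b hb; rewrite (hp b hb).
  have [hq|[Nq hq]] := ihq; last first.
    right; split; first by move=> x Nx; apply: sub_hull; right; apply: Nq.
    by move=> b hb; rewrite (hq b hb) orbT.
  left; apply: hull_min; first exact: hull_cvx.
  by move=> x [/hp|/hq].
Qed.


Lemma face_cvx s : cvx (face s).
Proof.
move=> x y t t0 t1 [xc xs] [yc ys]; split; first exact: cube_cvx.
by move=> i c E; rewrite !mxE (xs i c E) (ys i c E); ring.
Qed.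

Section OneD.
Variable s : 'I_n -> option bool.
Variable j : 'I_n.
Hypothesis sj : s j = None.
Hypothesis uniq_j : forall k, s k = None -> k = j.

Let b0 := fun k => if k == j then false else odflt false (s k).
Let b1 := fun k => if k == j then true else odflt false (s k).

Definition good (e0 e1 : bool) : set V :=
  [set x | face s x /\ ((x ord0 j = 0 /\ e0) \/ (x ord0 j = 1 /\ e1) \/ (e0 /\ e1))].

Lemma good_cvx e0 e1 : cvx (good e0 e1).
Proof.
move=> x y t t0 t1 [fx hx] [fy hy]; split; first exact: face_cvx.
rewrite !mxE.
case: e0 e1 hx hy => [] [] /=.
- by right; right.
- move=> [[x0 _]|[[_ //]|[_ //]]] [[y0 _]|[[_ //]|[_ //]]].
  left; split => //; rewrite x0 y0; ring.
- move=> [[_ //]|[[x1 _]|[//]]] [[_ //]|[[y1 _]|[//]]].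
  right; left; split => //; rewrite x1 y1; ring.
- by move=> [[_ //]|[[_ //]|[//]]].
Qed.

Lemma oneD (L : set V) (psi : rformula n) : L `<=` face s ->
  rapply psi L `<=` good (reval psi b0) (reval psi b1).
Proof.
move=> Lf; have h10 : (1 : R) <> 0 by apply/eqP; rewrite oner_eq0.
elim: psi => [i|i|p ihp q ihq|p ihp q ihq] /=.
- move=> x [/Lf fx xi]; split => //.
  have [eij|ij] := eqVneq i j.
    by right; left; rewrite -eij xi /b1 eij eqxx.
  case E: (s i) => [c|]; last by move: ij; rewrite (uniq_j E) eqxx.
  have := fx.2 i c E; rewrite xi; case: c E => E //= _.
  by right; right; rewrite /b0 /b1 (negbTE ij) E.
- move=> x [/Lf fx xi]; split => //.
  have [eij|ij] := eqVneq i j.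
    by left; rewrite -eij xi /b0 eij eqxx.
  case E: (s i) => [c|]; last by move: ij; rewrite (uniq_j E) eqxx.
  have := fx.2 i c E; rewrite xi; case: c E => E //= h; first by case: h10.
  by right; right; rewrite /b0 /b1 (negbTE ij) E.
- move=> x [/ihp [fx hp] /ihq [_ hq]]; split => //.
  case: hp => [[e0 p0]|[[e1 p1]|[p0 p1]]]; case: hq => [[e0' q0]|[[e1' q1]|[q0 q1]]];
  rewrite /= ?p0 ?p1 ?q0 ?q1 /=; try (by left); try (by right; left);
    try (by right; right); exfalso; apply: h10; congruence.
- apply: hull_min; first exact: good_cvx.
  move=> x [/ihp [fx hp]|/ihq [fx hq]]; split => //.
  + case: hp => [[e0 p0]|[[e1 p1]|[p0 p1]]]; rewrite /= ?p0 ?p1 /=;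
    try (by left); try (by right; left); by right; right.
  + case: hq => [[e0 p0]|[[e1 p1]|[p0 p1]]]; rewrite /= ?p0 ?p1 ?orbT /=;
    try (by left); try (by right; left); by right; right.
Qed.

Lemma cons_b0 : consistent s b0.
Proof.
move=> k c E; rewrite /b0; case: eqVneq => [ekj|_]; last by rewrite E.
by move: E; rewrite ekj sj.
Qed.

Lemma cons_b1 : consistent s b1.
Proof.
move=> k c E; rewrite /b1; case: eqVneq => [ekj|_]; last by rewrite E.
by move: E; rewrite ekj sj.
Qed.

Lemma face_fixed k : k != j -> exists c, s k = Some c.
Proof.
move=> kj; case E: (s k) => [c|]; first by exists c.
by move: kj; rewrite (uniq_j E) eqxx.
Qed.

Lemma oneD_final (L : set V) (phi : rformula n) : L `<=` face s ->
  rapply phi L `<=` hull (@rdefset R n phi `&` face s).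
Proof.
move=> Lf x /(oneD Lf) [[xc xs] hx].
have xeq (c : bool) : x ord0 j = (c : nat)%:R ->
    x = rowb (fun k => if k == j then c else odflt false (s k)).
  move=> xj; apply/rowP => k; rewrite mxE; case: eqVneq => [->//|kj].
  by have [c' E] := face_fixed kj; rewrite E (xs k c' E).
have inS (b : 'I_n -> bool) : consistent s b -> reval phi b ->
    hull (@rdefset R n phi `&` face s) (rowb b).
  by move=> cb eb; apply: sub_hull; split; [exists b | exact: rowb_face].
case: hx => [[xj e]|[[xj e]|[e0 e1]]].
- by rewrite (xeq false xj); apply: inS => //; exact: cons_b0.
- by rewrite (xeq true xj); apply: inS => //; exact: cons_b1.
- have -> : x = x ord0 j *: rowb b1 + (1 - x ord0 j) *: rowb b0.
    apply/rowP => k; rewrite !mxE /b0 /b1; case: eqVneq => [->|kj] /=.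
      by ring.
    by have [c' E] := face_fixed kj; rewrite E (xs k c' E); ring.
  have /andP[xj0 xj1] := xc j.
  by apply: hull_cvx => //; apply: inS => //; [exact: cons_b1 | exact: cons_b0].
Qed.

End OneD.


Lemma S_sub (psi : rformula n) (K : set V) : @rdefset R n psi `&` K `<=` rapply psi K.
Proof.
elim: psi => [i|i|p ihp q ihq|p ihp q ihq] /=.
- by move=> x [[b [-> e]] Kx]; split => //; move: e; rewrite mxE /= => ->.
- by move=> x [[b [-> e]] Kx]; split => //; move: e; rewrite mxE /= => /negPf ->.
- move=> x [[b [xe /andP[ep eq]]] Kx]; split.
  + by apply: ihp; split => //; exists b.
  + by apply: ihq; split => //; exists b.
- move=> x [[b [xe /orP[ep|eq]]] Kx]; apply: sub_hull.
  + by left; apply: ihp; split => //; exists b.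
  + by right; apply: ihq; split => //; exists b.
Qed.

Lemma S_riter (phi : rformula n) m (Q : set V) : @rdefset R n phi `<=` Q ->
  @rdefset R n phi `<=` riter phi m Q.
Proof.
move=> SQ; elim: m => [|m ih] //; rewrite /riter iterS => x Sx.
by apply: S_sub; split => //; apply: ih.
Qed.

Lemma mainT (phi : rformula n) k : forall s, nfree s = k.+1 -> forall L : set V, cvx L ->
  L `<=` face s -> riter phi k.+1 L `<=` hull (@rdefset R n phi `&` face s).
Proof.
elim: k => [|k ih] s hs L cL Lf.
- case: (pickP [pred i | s i == None]) => [j /eqP sj | H]; last first.
    have : nfree s = 0%N by apply: eq_card0 => j; rewrite !inE; apply: H.
    by rewrite hs.
  have uj : forall k, s k = None -> k = j.
    move=> k sk; apply/eqP; apply: contraT => kj.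
    have h0 : nfree (upd s j true) = 0%N by apply/eq_add_S; rewrite -(nfree_upd true sj).
    have := card0_eq h0 k; rewrite !inE /upd (negbTE kj) sk; by [].
  exact: (oneD_final sj uj).
- rewrite /riter iterS => x hx.
  set N := iter k.+1 (rapply phi) L in hx.
  have cN : cvx N := riter_cvx (phi:=phi) (m:=k.+1) cL.
  have Nf : N `<=` face s by move=> y /(riter_sub (phi:=phi) (m:=k.+1) cL) /Lf.
  have [h|[_ hb]] := one_step phi cN Nf; last first.
    apply: (face_hull (@hull_cvx (@rdefset R n phi `&` face s)) _
      (Nf _ (rapply_sub cN hx))).
    move=> b cb; apply: sub_hull; split; last exact: rowb_face.
    by exists b; split => //; apply: hb.
  apply: (hull_min (@hull_cvx _) _ (h x hx)).
  move=> y [Ny [i [si yi]]].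
  have [c yc] : exists c : bool, y ord0 i = (c : nat)%:R.
    by case: yi => ->; [exists false | exists true].
  have hc : ((c : nat)%:R : R) = 0 \/ ((c : nat)%:R : R) = 1 by case: c {yc}; [right|left].
  have hs' : nfree (upd s i c) = k.+1 by apply/eq_add_S; rewrite -(nfree_upd c si).
  have Lc : L `<=` cube by move=> z /Lf /face_cube.
  have hsub : [set x | L x /\ x ord0 i = (c : nat)%:R] `<=` face (upd s i c).
    move=> z [Lz zi]; have [zc zs] := Lf z Lz; split => // j c'.
    by rewrite /upd; case: eqVneq => [-> [<-]//|_]; exact: zs.
  have := riter_face (phi := phi) (m := k.+1) cL Lc hc (conj Ny yc).
  move=> /(ih _ hs' _ (cvx_hyp (i:=i) (c:=(c:nat)%:R) cL) hsub).
  apply: hull_mono => z [Sz [zc zs]]; split => //; split => // j c' E.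
  apply: zs; rewrite /upd; case: eqVneq => // eji.
  by move: E; rewrite eji si.
Qed.

End Main.

Theorem corollary4p5 (R : realType) (n : nat) (phi : rformula n)
  (Q : set 'rV[R]_n) :
  convexR Q -> Q `<=` @unit_cube R n -> @rdefset R n phi `<=` Q ->
  riter phi n Q = conv_hull (@rdefset R n phi).
Proof.
move=> /cvxE cQ Qc SQ.
revert SQ Qc cQ; revert phi Q; case: n => [|k] phi Q SQ Qc cQ.
  by exfalso; clear -phi; elim: phi => // [[m hm]|[m hm]].
pose s0 : 'I_k.+1 -> option bool := fun _ => None.
have hs : nfree s0 = k.+1.
  by rewrite /nfree -[RHS]card_ord; apply: eq_card => i; rewrite !inE.
rewrite eqEsubset; split.
- have Qf : Q `<=` face s0 by move=> x Qx; split; [exact: Qc | by []].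
  move=> x /(mainT hs cQ Qf); apply: hull_mono; by move=> y [].
- apply: hull_min; [exact: riter_cvx | exact: S_riter].
Qed.
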